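(* Consider the two-species BGK system described in the context, under the assumptions listed there. Let $(f_1,f_2)$ be a classical solution with positive initial data $f_1^0,f_2^0>0$. Then $f_1,f_2>0$.
   Context: Fix $N\ge1$, masses $m_1,m_2>0$, $\varepsilon\in(0,1]$, $\alpha\in[0,1]$, $\delta$ with $\frac{\frac{m_1}{m_2}\varepsilon-1}{1+\frac{m_1}{m_2}\varepsilon}\le\delta\le 1$, and $\gamma$ with $0\le\gamma\le\frac{m_1}{N}(1-\delta)\big[(1+\frac{m_1}{m_2}\varepsilon)\delta+1-\frac{m_1}{m_2}\varepsilon\big]$. For $f_k(x,v,t)$ define $n_k=\int f_k\,dv$, $n_ku_k=\int vf_k\,dv$, $Nn_kT_k=\int m_k|v-u_k|^2f_k\,dv$, and $u_{12}=\delta u_1+(1-\delta)u_2$, $u_{21}=u_2-\frac{m_1}{m_2}\varepsilon(1-\delta)(u_2-u_1)$, $T_{12}=\alpha T_1+(1-\alpha)T_2+\gamma|u_1-u_2|^2$, $T_{21}=\big[\frac1N\varepsilon m_1(1-\delta)(\frac{m_1}{m_2}\varepsilon(\delta-1)+\delta+1)-\varepsilon\gamma\big]|u_1-u_2|^2+\varepsilon(1-\alpha)T_1+(1-\varepsilon(1-\alpha))T_2$. Maxwellians: $M_k=\frac{n_k}{(2\pi T_k/m_k)^{N/2}}e^{-\frac{|v-u_k|^2}{2T_k/m_k}}$, $M_{12}=\frac{n_1}{(2\pi T_{12}/m_1)^{N/2}}e^{-\frac{|v-u_{12}|^2}{2T_{12}/m_1}}$, $M_{21}=\frac{n_2}{(2\pi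 T_{21}/m_2)^{N/2}}e^{-\frac{|v-u_{21}|^2}{2T_{21}/m_2}}$. The system is $\partial_tf_1+v\cdot\nabla_xf_1=\nu_{11}n_1(M_1-f_1)+\nu_{12}n_2(M_{12}-f_1)$, $\partial_tf_2+v\cdot\nabla_xf_2=\nu_{22}n_2(M_2-f_2)+\nu_{21}n_1(M_{21}-f_2)$, $f_k(t=0)=f_k^0$. Assumptions: (1) periodicity in $x$ with periods $a_1,\dots,a_N>0$ for solutions and initial data, spatial domain $\Lambda=\{x: x_i\in(0,a_i)\}$; (2) $f_k^0\ge0$, $(1+|v|^2)f_k^0\in L^1(\Lambda\times\mathbb{R}^N)$, $\int\!\!\int f_k^0\,dv\,dx=1$; (3) $\sup_{x,v}f_k^0(x,v)(1+|v|^q)=\frac12A_0<\infty$ for some $q>N+2$; (4) $\gamma_k(x,t):=\int f_k^0(x-vt,v)\,dv\ge C_0>0$ for all $t$; (5) $\nu_{jk}n_k=\tilde\nu_{jk}\frac{n_k}{n_1+n_2}$ with constants $\tilde\nu_{jk}>0$. *)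

(* Defs.v *)
From HB Require Import structures.
From mathcomp Require Import all_boot all_order all_algebra.
From mathcomp Require Import all_classical all_reals all_analysis.
Set Implicit Arguments. Unset Strict Implicit. Unset Printing Implicit Defensive.
Import Order.TTheory GRing.Theory Num.Theory.
Import numFieldNormedType.Exports.
Local Open Scope classical_set_scope.
Local Open Scope ring_scope.

Section BGKDefs.
Context {R : realType}.

Definition sqn (n : nat) (v : 'rV[R]_n) : R := \sum_i (v 0 i) ^+ 2.
Definition enorm (n : nat) (v : 'rV[R]_n) : R := Num.sqrt (sqn v).
Definition ebase (n : nat) (i : 'I_n) : 'rV[R]_n := delta_mx 0 i.

(* Lebesgue integral over R^n of a real function, written as an iterated
   integral dv_1 ... dv_n (equal to the n-dimensional Lebesgue integral for
   integrable functions by Fubini). *)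
Fixpoint iint (n : nat) : ('rV[R]_n -> R) -> R :=
  match n return ('rV[R]_n -> R) -> R with
  | 0 => fun g => g 0
  | n'.+1 => fun g => Rintegral (@lebesgue_measure R) setT
      (fun a : R => iint (fun w : 'rV[R]_n' => g (row_mx (a%:M : 'rV[R]_1) w)))
  end.

(* Extended-valued iterated integral of a nonnegative function on R^n
   (= Lebesgue integral by Tonelli). *)
Fixpoint iintE (n : nat) : ('rV[R]_n -> \bar R) -> \bar R :=
  match n return ('rV[R]_n -> \bar R) -> \bar R with
  | 0 => fun g => g 0
  | n'.+1 => fun g => (\int[@lebesgue_measure R]_(a in setT)
      iintE (fun w : 'rV[R]_n' => g (row_mx (a%:M : 'rV[R]_1) w)))%E
  end.

Definition box (n : nat) (a : 'I_n -> R) : set 'rV[R]_n :=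
  [set x | forall i, 0 < x 0 i < a i].

(* macroscopic quantities of g = f_k(x,.,t) : R^N -> R, species mass m *)
Definition dens (n : nat) (g : 'rV[R]_n -> R) : R := iint g.
Definition veloc (n : nat) (g : 'rV[R]_n -> R) : 'rV[R]_n :=
  (dens g)^-1 *: \row_i iint (fun v => v 0 i * g v).
Definition temp (n : nat) (m : R) (g : 'rV[R]_n -> R) : R :=
  (n%:R * dens g)^-1 * iint (fun v => m * sqn (v - veloc g) * g v).

Definition maxw (n : nat) (m nn T : R) (u v : 'rV[R]_n) : R :=
  nn / ((2 * pi * T / m) `^ (n%:R / 2))
     * expR (- sqn (v - u) / (2 * T / m)).

Definition u12 (n : nat) (delta : R) (u1 u2 : 'rV[R]_n) : 'rV[R]_n :=
  delta *: u1 + (1 - delta) *: u2.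
Definition u21 (n : nat) (m1 m2 eps delta : R) (u1 u2 : 'rV[R]_n) : 'rV[R]_n :=
  u2 - (m1 / m2 * eps * (1 - delta)) *: (u2 - u1).
Definition T12 (n : nat) (alpha gamma : R) (u1 u2 : 'rV[R]_n) (T1 T2 : R) : R :=
  alpha * T1 + (1 - alpha) * T2 + gamma * sqn (u1 - u2).
Definition T21 (n : nat) (m1 m2 eps alpha delta gamma : R)
    (u1 u2 : 'rV[R]_n) (T1 T2 : R) : R :=
  ((n%:R)^-1 * eps * m1 * (1 - delta)
      * (m1 / m2 * eps * (delta - 1) + delta + 1) - eps * gamma) * sqn (u1 - u2)
  + eps * (1 - alpha) * T1 + (1 - eps * (1 - alpha)) * T2.

End BGKDefs.

(* Main.v *)
Require Import Defs.
From HB Require Import structures.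
From mathcomp Require Import all_boot all_order all_algebra.
From mathcomp Require Import all_classical all_reals all_analysis.
From mathcomp Require Import lra.
Import Order.TTheory GRing.Theory Num.Theory.
Import numFieldNormedType.Exports.
Local Open Scope classical_set_scope.
Local Open Scope ring_scope.
Section P.
Context {R : realType} {N : nat} (a : 'I_N -> R) (g : 'rV[R]_N -> R).
Hypothesis ha : forall i, 0 < a i.
Hypothesis hg : forall i x, g (x + a i *: ebase i) = g x.

Lemma per_int i (k : int) x : g (x + (k%:~R * a i) *: ebase i) = g x.
Proof.
have hn : forall (n : nat) y, g (y + (n%:R * a i) *: ebase i) = g y.
  elim=> [|n IH] y; first by rewrite mul0r scale0r addr0.
  by rewrite -[n.+1]addn1 natrD mulrDl mul1r scalerDl addrA hg IH.
case: k => n.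
  exact: hn.
rewrite NegzE mulrNz mulNr scaleNr.
by rewrite -{2}(subrK (((n.+1)%:R * a i) *: ebase i) x) hn.
Qed.

Lemma per_sum (z : 'I_N -> int) x :
  g (x + \sum_i (((z i)%:~R * a i) *: ebase i)) = g x.
Proof.
move: x; apply: (big_rec (fun y => forall x, g (x + y) = g x)).
  by move=> x; rewrite addr0.
by move=> j y _ IH x; rewrite addrA IH per_int.
Qed.

Lemma ebase_sum (c : 'I_N -> R) i : (\sum_j c j *: ebase j) 0 i = c i.
Proof.
rewrite summxE (bigD1 i) //= big1 ?addr0.
  by rewrite !mxE !eqxx mulr1.
by move=> j /negbTE ji; rewrite !mxE eq_sym ji andbF mulr0.
Qed.

Lemma per_reduce (x : 'rV[R]_N) : exists y : 'rV[R]_N, (forall i, 0 <= y ord0 i <= a i) /\ g y = g x.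
Proof.
pose z i := Num.floor (x 0 i / a i).
exists (x + \sum_i (((- z i)%:~R * a i) *: ebase i)); split; last exact: per_sum.
move=> i; rewrite (_ : ord0 = 0) // !mxE ebase_sum.
have h1 := floor_le (x 0 i / a i).
have h2 := floorD1_gt (x 0 i / a i).
rewrite -/(z i) in h1 h2.
rewrite intrD in h2.
have hai := ha i.
rewrite mulrNz mulNr.
have e1 : (z i)%:~R * a i <= x 0 i by rewrite -ler_pdivlMr.
have e2 : x 0 i < ((z i)%:~R + 1) * a i by rewrite -ltr_pdivrMr.
apply/andP; split; nra.
Qed.
End P.
Lemma Dmin (R : realType) (V : normedModType R) (g : V -> R) x e :
  derivable g x e -> (forall y, g x <= g y) -> 'D_e g x = 0.
Proof.
move=> dg gmin; apply/eqP; rewrite eq_le; apply/andP; split.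
  rewrite ['D_e g x]cvg_at_leftE; last exact: dg.
  apply: limr_le.
    by apply/cvg_ex; eexists; apply: cvg_dnbhs_at_left; exact: dg.
  near=> h; apply: mulr_le0_ge0.
    by rewrite invr_le0; apply: ltW; near: h; exists 1 => /=.
  by rewrite subr_ge0 /=; apply: gmin.
rewrite ['D_e g x]cvg_at_rightE; last exact: dg.
apply: limr_ge.
  by apply/cvg_ex; eexists; apply: cvg_dnbhs_at_right; exact: dg.
near=> h; apply: mulr_ge0.
  by rewrite invr_ge0; apply: ltW; near: h; exists 1 => /=.
by rewrite subr_ge0 /=; apply: gmin.
Unshelve. all: by end_near. Qed.

Lemma Dleft (R : realType) (f : R -> R) c b : b < c -> derivable f c 1 ->
  (forall t, b < t < c -> f c <= f t) -> 'D_1 f c <= 0.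
Proof.
move=> bc df fmin.
rewrite ['D_1 f c]cvg_at_leftE; last exact: df.
apply: limr_le.
  by apply/cvg_ex; eexists; apply: cvg_dnbhs_at_left; exact: df.
near=> h; apply: mulr_le0_ge0.
  by rewrite invr_le0; apply: ltW; near: h; exists 1 => /=.
rewrite subr_ge0 /= [_ *: 1]mulr1; apply: fmin; near: h.
exists (c - b); first by rewrite /= subr_gt0.
move=> h; rewrite /= distrC subr0.
move=> /ltr_normlP [] h1 h2 hneg; apply/andP; split; first by lra.
by lra.
Unshelve. all: by end_near. Qed.

Lemma key (R : realType) (N : nat) (a : 'I_N -> R)
  (F : 'rV[R]_N -> 'rV[R]_N -> R -> R) (v : 'rV[R]_N) :
 (forall i, 0 < a i) ->
 (forall i x t, 0 <= t -> F (x + a i *: ebase i) v t = F x v t) ->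
 {within [set p : 'rV[R]_N * 'rV[R]_N * R | 0 <= p.2],
    continuous (fun p => F p.1.1 p.1.2 p.2)} ->
 (forall x, 0 < F x v 0) ->
 (forall x t, 0 < t -> derivable (fun s => F x v s) t 1 /\
                       differentiable (fun y => F y v t) x) ->
 (forall x t, 0 < t -> F x v t <= 0 ->
    0 < derive1 (fun s => F x v s) t
        + \sum_i v 0 i * 'D_(ebase i) (fun y => F y v t) x) ->
 forall x t, 0 <= t -> 0 < F x v t.
Proof.
move=> ha hper hcont h0 hder hpde x0 t0 t0ge.
rewrite ltNge; apply/negP => Fneg.
pose K := [set y : 'rV[R]_N | forall i, [set` `[0, a i]%R] (y ord0 i)].
have red : forall x t, 0 <= t -> exists y, K y /\ F y v t = F x v t.
  move=> x t ht.
  have [y [hy ey]] := per_reduce a (fun y => F y v t) ha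
     (fun i x => hper i x t ht) x.
  exists y; split => // i; rewrite /= in_itv /=; exact: hy.
have cK : compact K by apply: (@rV_compact _ _ (fun i => [set` `[0, a i]%R])) => i; exact: segment_compact.
pose D := [set p : 'rV[R]_N * 'rV[R]_N * R | 0 <= p.2].
pose Fp := fun p : 'rV[R]_N * 'rV[R]_N * R => F p.1.1 p.1.2 p.2.
pose A := (K `*` [set v]) `*` [set` `[0, t0]%R].
have cA : compact A.
  apply: compact_setX; last exact: segment_compact.
  by apply: compact_setX => //; exact: compact_set1.
have AD : A `<=` D.
  by move=> [[y w] s] [_ /=]; rewrite in_itv /= => /andP[].
have [V cV VD] : exists2 V, closed V & V `&` D = [set p | Fp p <= 0] `&` D.
  apply/closed_subspaceP.
  have := @preimage_closed _ _ (from_subspace D Fp) [set r : R | r <= 0] _ (@closed_le R 0).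
  apply => p _; exact: hcont.
pose C := A `&` V.
have cC : compact C := compact_closedI cA cV.
have memC : forall p, A p -> Fp p <= 0 -> C p.
  move=> p Ap Fp0; split => //.
  have : ([set p | Fp p <= 0] `&` D) p by split => //; exact: AD.
  by rewrite -VD => -[].
have [y0 [Ky0 ey0]] := red x0 t0 t0ge.
have C0 : C !=set0.
  exists (y0, v, t0); apply: memC; last by rewrite /Fp /= ey0.
  by split; [split|rewrite /= in_itv /= t0ge lexx].
have csnd : {within C, continuous (fun p : 'rV[R]_N * 'rV[R]_N * R => p.2)}.
  by apply: continuous_subspaceT => p; exact: cvg_snd.
have [ps psC psmin] := compact_EVT_min C0 cC csnd.
move: psC; rewrite inE => -[psA psV].
have psU : Fp ps <= 0.
  have : (V `&` D) ps by split => //; exact: AD.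
  by rewrite VD => -[].
case: ps psA psV psU psmin => [[x1 w] ts] [[Kx1 /= ->]].
rewrite /= in_itv /= => /andP[ts0 tst0] _ Fx1 psmin.
rewrite /Fp /= in Fx1.
have tspos : 0 < ts.
  rewrite lt_def ts0 andbT; apply/negP => /eqP ts_eq0.
  by move: Fx1; rewrite ts_eq0 leNgt (h0 x1).
have posb : forall y s, 0 <= s -> s < ts -> 0 < F y v s.
  move=> y s s0 sts; rewrite ltNge; apply/negP => Fy.
  have [y' [Ky' ey']] := red y s s0.
  have : C (y', v, s).
    apply: memC; last by rewrite /Fp /= ey'.
    split; first by split.
    by rewrite /= in_itv /= s0 /=; apply: ltW; apply: lt_le_trans tst0.
  move/mem_set/psmin => /=.
  by rewrite leNgt sts.
pose A2 := (K `*` [set v]) `*` [set ts].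
have cA2 : compact A2.
  apply: compact_setX; last exact: compact_set1.
  by apply: compact_setX => //; exact: compact_set1.
have A2D : A2 `<=` D by move=> [[y w'] s] [_ /= ->].
have A20 : A2 !=set0 by exists (x1, v, ts).
have cont2 : {within A2, continuous Fp} := continuous_subspaceW A2D hcont.
have [[[x2 w2] t2] p2A2 p2min] := compact_EVT_min A20 cA2 cont2.
move: p2A2; rewrite inE => -[[Kx2 /= w2v] /= t2ts].
subst w2 t2.
have gmin : forall y, F x2 v ts <= F y v ts.
  move=> y; have [y' [Ky' <-]] := red y ts ts0.
  have : A2 (y', v, ts) by [].
  by move/mem_set/p2min.
have Fx2 : F x2 v ts <= 0.
  apply: le_trans Fx1.
  have : A2 (x1, v, ts) by [].
  by move/mem_set/p2min.
have [dt dx] := hder x2 ts tspos.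
have hD : forall i, 'D_(ebase i) (fun y => F y v ts) x2 = 0.
  by move=> i; apply: Dmin; [exact: diff_derivable | exact: gmin].
have hT : derive1 (fun s => F x2 v s) ts <= 0.
  rewrite derive1E; apply: (@Dleft _ _ _ 0) => // s /andP[s0 sts].
  by apply: le_trans Fx2 _; apply: ltW; apply: posb => //; apply: ltW.
have := hpde x2 ts tspos Fx2.
rewrite big1 ?addr0; last by move=> i _; rewrite hD mulr0.
by rewrite ltNge hT.
Qed.

Lemma maxw_gt0 (R : realType) n (m nn T : R) (u v : 'rV[R]_n) :
  0 < m -> 0 < nn -> 0 < T -> 0 < maxw m nn T u v.
Proof.
move=> hm hn hT; rewrite /maxw; apply: mulr_gt0; last exact: expR_gt0.
apply: divr_gt0 => //; apply: powR_gt0.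
by apply: divr_gt0 => //; apply: mulr_gt0 => //; apply: mulr_gt0 => //; exact: pi_gt0.
Qed.

Lemma maxw_ge0 (R : realType) n (m nn T : R) (u v : 'rV[R]_n) :
  0 <= nn -> 0 <= maxw m nn T u v.
Proof.
move=> hn; rewrite /maxw; apply: mulr_ge0; last exact: expR_ge0.
by apply: divr_ge0 => //; apply: powR_ge0.
Qed.

Lemma rhs_pos (R : realType) (c1 c2 M1 M2 f : R) : 0 < c1 -> 0 <= c2 ->
  0 < M1 -> 0 <= M2 -> f <= 0 -> 0 < c1 * (M1 - f) + c2 * (M2 - f).
Proof. move=> *; nra. Qed.

Lemma nu_pos (R : realType) (nu nt n1 n2 nk : R) : 0 < nt -> 0 < n1 -> 0 < n2 ->
  0 < nk -> nu * nk = nt * nk / (n1 + n2) -> 0 < nu * nk.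
Proof.
move=> *; have -> : nu * nk = nt * nk / (n1 + n2) by [].
by apply: divr_gt0; [apply: mulr_gt0 | apply: addr_gt0].
Qed.
Theorem mainTheorem9 (R : realType) (N : nat)
  (m1 m2 eps alpha delta gamma : R) (a : 'I_N -> R)
  (nut11 nut12 nut21 nut22 : R)
  (nu11 nu12 nu21 nu22 : 'rV[R]_N -> R -> R)
  (f10 f20 : 'rV[R]_N -> 'rV[R]_N -> R)
  (f1 f2 : 'rV[R]_N -> 'rV[R]_N -> R -> R) :
  (* parameters *)
  (1 <= N)%N -> 0 < m1 -> 0 < m2 -> 0 < eps <= 1 -> 0 <= alpha <= 1 ->
  (m1 / m2 * eps - 1) / (1 + m1 / m2 * eps) <= delta <= 1 ->
  0 <= gamma <= m1 / N%:R * (1 - delta)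
                * ((1 + m1 / m2 * eps) * delta + 1 - m1 / m2 * eps) ->
  (* (1) periodicity in x, periods a_i > 0 *)
  (forall i, 0 < a i) ->
  (forall i x v, f10 (x + a i *: ebase i) v = f10 x v) ->
  (forall i x v, f20 (x + a i *: ebase i) v = f20 x v) ->
  (forall i x v t, 0 <= t -> f1 (x + a i *: ebase i) v t = f1 x v t) ->
  (forall i x v t, 0 <= t -> f2 (x + a i *: ebase i) v t = f2 x v t) ->
  (* (2) initial data nonnegative, (1+|v|^2) f_k^0 in L^1(Lambda x R^N),
     total mass one *)
  (forall f0, f0 = f10 \/ f0 = f20 ->
     (forall x v, 0 <= f0 x v) /\
     (iintE (fun x => ((\1_(box a) x : R)%:E *
        iintE (fun v => ((1 + sqn v) * `|f0 x v|)%:E))%E) < +oo)%E /\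
     iint (fun x => (\1_(box a) x : R) * iint (fun v => f0 x v)) = 1) ->
  (* (3) weighted sup bound *)
  (exists q : R, N%:R + 2 < q /\ exists A0 : R,
     forall x v, f10 x v * (1 + enorm v `^ q) <= A0 / 2 /\
                 f20 x v * (1 + enorm v `^ q) <= A0 / 2) ->
  (* (4) lower bound on the free-transport densities *)
  (exists C0 : R, 0 < C0 /\ forall x t, 0 <= t ->
     C0 <= iint (fun v => f10 (x - t *: v) v) /\
     C0 <= iint (fun v => f20 (x - t *: v) v)) ->
  (* (5) collision frequencies *)
  0 < nut11 -> 0 < nut12 -> 0 < nut21 -> 0 < nut22 ->
  (forall x t, 0 <= t ->
     let n1 := dens (fun v => f1 x v t) in
     let n2 := dens (fun v => f2 x v t) in
     nu11 x t * n1 = nut11 * n1 / (n1 + n2) /\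
     nu12 x t * n2 = nut12 * n2 / (n1 + n2) /\
     nu21 x t * n1 = nut21 * n1 / (n1 + n2) /\
     nu22 x t * n2 = nut22 * n2 / (n1 + n2)) ->
  (* (f1, f2) is a classical solution *)
  (forall f, f = f1 \/ f = f2 ->
     {within [set p : 'rV[R]_N * 'rV[R]_N * R | 0 <= p.2],
        continuous (fun p => f p.1.1 p.1.2 p.2)} /\
     (forall x v t, 0 < t ->
        derivable (fun s => f x v s) t 1 /\
        differentiable (fun y => f y v t) x) /\
     (forall x t, 0 <= t ->
        (iintE (fun v => ((1 + sqn v) * `|f x v t|)%:E) < +oo)%E /\
        0 < dens (fun v => f x v t))) ->
  (forall x t, 0 <= t ->
     0 < temp m1 (fun v => f1 x v t) /\ 0 < temp m2 (fun v => f2 x v t)) ->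
  (forall x v, f1 x v 0 = f10 x v) ->
  (forall x v, f2 x v 0 = f20 x v) ->
  (forall x v t, 0 < t ->
     let g1 := fun w => f1 x w t in
     let g2 := fun w => f2 x w t in
     let n1 := dens g1 in let n2 := dens g2 in
     let uu1 := veloc g1 in let uu2 := veloc g2 in
     let TT1 := temp m1 g1 in let TT2 := temp m2 g2 in
     let M1 := maxw m1 n1 TT1 uu1 v in
     let M2 := maxw m2 n2 TT2 uu2 v in
     let M12 := maxw m1 n1 (T12 alpha gamma uu1 uu2 TT1 TT2)
                          (u12 delta uu1 uu2) v in
     let M21 := maxw m2 n2 (T21 m1 m2 eps alpha delta gamma uu1 uu2 TT1 TT2)
                          (u21 m1 m2 eps delta uu1 uu2) v in
     (derive1 (fun s => f1 x v s) t
        + \sum_i v 0 i * 'D_(ebase i) (fun y => f1 y v t) x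
      = nu11 x t * n1 * (M1 - f1 x v t) + nu12 x t * n2 * (M12 - f1 x v t)) /\
     (derive1 (fun s => f2 x v s) t
        + \sum_i v 0 i * 'D_(ebase i) (fun y => f2 y v t) x
      = nu22 x t * n2 * (M2 - f2 x v t) + nu21 x t * n1 * (M21 - f2 x v t))) ->
  (* positive initial data *)
  (forall x v, 0 < f10 x v) -> (forall x v, 0 < f20 x v) ->
  forall x v t, 0 <= t -> 0 < f1 x v t /\ 0 < f2 x v t.
Proof.
move=> hN hm1 hm2 heps halpha hdelta hgamma ha hp10 hp20 hp1 hp2 hL1 hsup hC0
  hn11 hn12 hn21 hn22 hnu hcl htemp hi1 hi2 hpde hpos1 hpos2 x v t ht.
have [hc1 [hd1 hi1']] := hcl f1 (or_introl erefl).
have [hc2 [hd2 hi2']] := hcl f2 (or_intror erefl).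
split.
- apply: (@key R N a f1 v ha (fun i x t ht => hp1 i x v t ht) hc1) => //.
  + by move=> y; rewrite hi1.
  + by move=> y s hs; apply: hd1.
  + move=> y s hs Fneg.
    have hs0 : 0 <= s by apply: ltW.
    have [_ n1p] := hi1' y s hs0.
    have [_ n2p] := hi2' y s hs0.
    have [T1p _] := htemp y s hs0.
    have [e11 [e12 _]] := hnu y s hs0.
    have := hpde y v s hs; cbv zeta => -[-> _].
    apply: rhs_pos => //.
    * exact: nu_pos e11.
    * apply: ltW; move: e12; exact: nu_pos.
    * exact: maxw_gt0.
    * apply: maxw_ge0; exact: ltW.
- apply: (@key R N a f2 v ha (fun i x t ht => hp2 i x v t ht) hc2) => //.
  + by move=> y; rewrite hi2.
  + by move=> y s hs; apply: hd2.
  + move=> y s hs Fneg.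
    have hs0 : 0 <= s by apply: ltW.
    have [_ n1p] := hi1' y s hs0.
    have [_ n2p] := hi2' y s hs0.
    have [_ T2p] := htemp y s hs0.
    have [_ [_ [e21 e22]]] := hnu y s hs0.
    have := hpde y v s hs; cbv zeta => -[_ ->].
    apply: rhs_pos => //.
    * exact: nu_pos e22.
    * apply: ltW; move: e21; exact: nu_pos.
    * exact: maxw_gt0.
    * apply: maxw_ge0; exact: ltW.
Qed.
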